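(* Let $\varepsilon=\left(\begin{smallmatrix} -1&0\\ 0&1 \end{smallmatrix}\right)$, $S=\left(\begin{smallmatrix} 0&-1\\ 1&0 \end{smallmatrix}\right)$, $T=\left(\begin{smallmatrix} 1&1\\ 0&1 \end{smallmatrix}\right)$, $T_{\omega}=\left(\begin{smallmatrix} 1&\omega\\ 0&1 \end{smallmatrix}\right)$ where $\omega=\frac{1+\sqrt{-7}}{2}$, and let $\mathbf{1}$ denote the identity matrix. Then, \begin{itemize} \item [(1)] $P_{k,\Delta}(\bar{z},z)=P_{k,\Delta}(z,\bar{z})$. \item [(2)] $P_{k,\Delta}(uz,\bar{u}\bar{z})=P_{k,\Delta}(z,\bar{z})$ for any unit $u \in \mathcal{O}_d$. \item [(3)] $P_{k,\Delta}|(\mathbf{1}+S)=0$. \item [(4)] $P_{k,\Delta}|(\mathbf{1}+TS\varepsilon-T)=0$. \item [(5)] Additionally, when $d=7$ (so $P_{k,\Delta}\in V_{k,k}(\mathcal{O}_7)$) we have \[ P_{k,\Delta}|(\mathbf{1}-T_{\omega}-ST^{-1}T_{\omega}S-TT_{\omega}^{-1}ST_{\omega})=0.\] \end{itemize}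
   Context: Let $d\in\{1,2,3,7,11\}$, $K=\mathbb{Q}(\sqrt{-d})$ the corresponding Euclidean imaginary quadratic field and $\mathcal{O}_d$ its ring of integers, with norm $N(b)=b\bar b$. Let $k\geq 1$ be an odd integer and $\Delta$ a positive integer that is not a norm of an element of $\mathcal{O}_d$. Define the polynomial $$P_{k,\Delta}(z,\bar{z})=\sum_{\substack{a,c\in\mathbb{Z},\ b\in\mathcal{O}_d\\ N(b)-ac=\Delta \\ c<0<a}} \left(az\bar{z}+bz+\bar{b}\bar{z}+c\right)^{k}.$$ For a polynomial $P(z,\bar z)$ of degree at most $k$ in each of $z,\bar z$ and a matrix $\gamma=\left(\begin{smallmatrix} a&b\\ c&e\end{smallmatrix}\right)$ (with complex entries, modulo $\pm 1$), the right action is $(P|\gamma)(z,\bar z)=(cz+e)^{k}\overline{(cz+e)}^{k}P\left(\frac{az+b}{cz+e},\frac{\bar a\bar z+\bar b}{\bar c\bar z+\bar e}\right)$, extended linearly to formal integer combinations of matrices (the group ring); in particular $P|\varepsilon=P(-z,-\bar z)$. *)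

(* Defs.v *)
From HB Require Import structures.
From mathcomp Require Import all_boot all_order all_algebra all_field.
From mathcomp Require Import boolp classical_sets fsbigop.
Set Implicit Arguments. Unset Strict Implicit. Unset Printing Implicit Defensive.
Import Order.TTheory GRing.Theory Num.Theory.
Local Open Scope classical_set_scope.
Local Open Scope ring_scope.

(* K = Q(sqrt(-d)) is embedded in algC (algebraic complex numbers). *)
Definition omega_d (d : nat) : algC :=
  if (d %% 4 == 3)%N then (1 + sqrtC (- (d%:R))) / 2 else sqrtC (- (d%:R)).

Definition Oel (d : nat) (x y : int) : algC := x%:~R + y%:~R * omega_d d.

Definition in_Od (d : nat) (b : algC) : Prop := exists x y : int, b = Oel d x y.

Definition unit_Od (d : nat) (u : algC) : Prop :=
  in_Od d u /\ exists v, in_Od d v /\ u * v = 1.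

Definition normK (b : algC) : algC := b * b^*.

(* Polynomials in two independent variables z (inner, X) and zbar (outer, Y):
   the coefficient of z^i zbar^j of P is (P`_j)`_i. *)
Notation poly2 := {poly {poly algC}}.
Definition Xz : poly2 := ('X : {poly algC})%:P.
Definition Yw : poly2 := 'X.
Definition coef2 (P : poly2) (i j : nat) : algC := (P`_j)`_i.
Definition cst2 (a : algC) : poly2 := a%:P%:P.

Definition subst2 (P f g : poly2) : poly2 :=
  \sum_(j < size P) \sum_(i < size P`_j) cst2 (coef2 P i j) * f ^+ i * g ^+ j.

Definition Pindex (d Delta : nat) : set (int * int * int * int) :=
  [set t | let: (a, c, x, y) := t in
           normK (Oel d x y) - (a * c)%:~R = Delta%:R /\ (c < 0)%R /\ (0 < a)%R].

Definition Pterm (d k : nat) (t : int * int * int * int) : poly2 :=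
  let: (a, c, x, y) := t in
  let b := Oel d x y in
  (cst2 a%:~R * Xz * Yw + cst2 b * Xz + cst2 b^* * Yw + cst2 c%:~R) ^+ k.

Definition P_kD (d k Delta : nat) : poly2 := \sum_(t \in Pindex d Delta) Pterm d k t.

(* Right slash action of weight (k,k) on V_{k,k} (degree <= k in each variable):
   (P|g)(z,zb) = (cz+e)^k (cb zb+eb)^k P((az+b)/(cz+e), (ab zb+bb)/(cb zb+eb)),
   written out on monomials. *)
Definition slash (k : nat) (P : poly2) (g : 'M[algC]_2) : poly2 :=
  let a := g 0 0 in let b := g 0 1 in let c := g 1 0 in let e := g 1 1 in
  \sum_(j < k.+1) \sum_(i < k.+1)
     cst2 (coef2 P i j) *
     (cst2 a * Xz + cst2 b) ^+ i * (cst2 c * Xz + cst2 e) ^+ (k - i) *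
     (cst2 a^* * Yw + cst2 b^*) ^+ j * (cst2 c^* * Yw + cst2 e^*) ^+ (k - j).

(* extension to the group ring: formal integer combinations of matrices *)
Definition slashZ (k : nat) (P : poly2) (s : seq (int * 'M[algC]_2)) : poly2 :=
  \sum_(p <- s) p.1%:~R *: slash k P p.2.

Definition mx2 (a b c e : algC) : 'M[algC]_2 :=
  \matrix_(i < 2, j < 2)
    (if i == 0 then (if j == 0 then a else b) else (if j == 0 then c else e)).

Definition epsM : 'M[algC]_2 := mx2 (-1) 0 0 1.
Definition SM : 'M[algC]_2 := mx2 0 (-1) 1 0.
Definition TM : 'M[algC]_2 := mx2 1 1 0 1.
Definition omega7 : algC := (1 + sqrtC (-7)) / 2.
Definition TwM : 'M[algC]_2 := mx2 1 omega7 0 1.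
Definition oneM : 'M[algC]_2 := 1%:M.

(* Main.v *)
Require Import Defs.
From HB Require Import structures.
From mathcomp Require Import all_boot all_order all_algebra all_field.
From mathcomp Require Import boolp classical_sets fsbigop.
From mathcomp Require Import functions cardinality.
From mathcomp Require Import ring lra zify.
Import Order.TTheory GRing.Theory Num.Theory.
Local Open Scope ring_scope.
Set Implicit Arguments. Unset Strict Implicit. Unset Printing Implicit Defensive.

Definition ev (P : poly2) (u v : algC) : algC := (map_poly (horner_eval u) P).[v].

Lemma evD P Q u v : ev (P + Q) u v = ev P u v + ev Q u v.
Proof. by rewrite /ev rmorphD hornerD. Qed.
Lemma evM P Q u v : ev (P * Q) u v = ev P u v * ev Q u v.
Proof. by rewrite /ev rmorphM hornerM. Qed.
Lemma evN P u v : ev (- P) u v = - ev P u v.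
Proof. by rewrite /ev rmorphN hornerN. Qed.
Lemma evB P Q u v : ev (P - Q) u v = ev P u v - ev Q u v.
Proof. by rewrite evD evN. Qed.
Lemma ev0 u v : ev 0 u v = 0.
Proof. by rewrite /ev rmorph0 horner0. Qed.
Lemma evX P n u v : ev (P ^+ n) u v = ev P u v ^+ n.
Proof. by rewrite /ev rmorphXn horner_exp. Qed.
Lemma ev_sum (I : Type) (r : seq I) (F : I -> poly2) u v :
  ev (\sum_(i <- r) F i) u v = \sum_(i <- r) ev (F i) u v.
Proof. by rewrite /ev rmorph_sum horner_sum. Qed.
Lemma ev_cst2 a u v : ev (cst2 a) u v = a.
Proof. by rewrite /ev /cst2 map_polyC /= horner_evalE !hornerC. Qed.
Lemma ev_Xz u v : ev Xz u v = u.
Proof. by rewrite /ev /Xz map_polyC /= horner_evalE hornerC hornerX. Qed.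
Lemma ev_Yw u v : ev Yw u v = v.
Proof. by rewrite /ev /Yw map_polyX hornerX. Qed.
Lemma ev_polyC (c : {poly algC}) u v : ev c%:P u v = c.[u].
Proof. by rewrite /ev map_polyC hornerC /= horner_evalE. Qed.

Lemma ev_coef P u v :
  ev P u v = \sum_(j < size P) \sum_(i < size P`_j) coef2 P i j * u ^+ i * v ^+ j.
Proof.
have hs : (size (map_poly (horner_eval u) P) <= size P)%N.
  by apply/leq_sizeP => j hj; rewrite coef_map /= nth_default // horner_evalE horner0.
rewrite /ev (horner_coef_wide _ hs); apply: eq_bigr => j _.
rewrite coef_map /= horner_evalE horner_coef mulr_suml; apply: eq_bigr => i _.
by rewrite /coef2.
Qed.

Lemma poly_all_roots (q : {poly algC}) : (forall x, q.[x] = 0) -> q = 0.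
Proof.
move=> h; apply: (@roots_geq_poly_eq0 _ q [seq i%:R | i <- iota 0 (size q)]).
- by apply/allP => x _; apply/rootP.
- rewrite map_inj_uniq ?iota_uniq // => i j /eqP.
  by rewrite eqr_nat => /eqP.
- by rewrite size_map size_iota.
Qed.

Lemma poly_avoid (p : {poly algC}) (bad : seq algC) :
  (forall x, x \notin bad -> p.[x] = 0) -> p = 0.
Proof.
move=> h.
have hq : p * \prod_(b <- bad) ('X - b%:P) = 0.
  apply: poly_all_roots => x; rewrite hornerM horner_prod.
  case: (boolP (x \in bad)) => hx; last by rewrite h // mul0r.
  rewrite (big_rem x hx) /= hornerXsubC subrr mul0r mulr0 //.
move/eqP: hq; rewrite mulf_eq0 => /orP[/eqP //|].
rewrite prodf_seq_eq0 => /hasP[b _ /=]; by rewrite polyXsubC_eq0.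
Qed.

Lemma ev_eq0 P (bu bv : seq algC) :
  (forall u v, u \notin bu -> v \notin bv -> ev P u v = 0) -> P = 0.
Proof.
move=> h; apply/polyP => j; rewrite coef0.
apply: (poly_avoid (bad := bu)) => u hu.
have h0: map_poly (horner_eval u) P = 0.
  by apply: (poly_avoid (bad := bv)) => v hv; apply: h.
have := congr1 (fun p : {poly algC} => p`_j) h0; rewrite coef_map coef0 /= horner_evalE => ->; done.
Qed.

Lemma ev_eq P Q (bu bv : seq algC) :
  (forall u v, u \notin bu -> v \notin bv -> ev P u v = ev Q u v) -> P = Q.
Proof.
move=> h; apply/eqP; rewrite -subr_eq0; apply/eqP.
apply: (ev_eq0 (bu := bu) (bv := bv)) => u v hu hv; by rewrite evB h // subrr.
Qed.

Definition bdeg (m1 m2 : nat) (P : poly2) :=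
  forall i j, (m1 < i)%N || (m2 < j)%N -> coef2 P i j = 0.

Lemma bdegM m1 m2 n1 n2 P Q : bdeg m1 m2 P -> bdeg n1 n2 Q ->
  bdeg (m1 + n1) (m2 + n2) (P * Q).
Proof.
move=> hP hQ i j hij; rewrite /coef2 coefM coef_sum big1 // => [[l hl]] _ /=.
rewrite coefM big1 // => [[m hm]] _ /=.
have : [|| (m1 < m)%N, (m2 < l)%N, (n1 < i - m)%N | (n2 < j - l)%N] by lia.
case/or4P => h.
- by have := hP m l; rewrite /coef2 h /= => ->; rewrite ?mul0r.
- by have := hP m l; rewrite /coef2 h orbT => ->; rewrite ?mul0r.
- by have := hQ (i - m)%N (j - l)%N; rewrite /coef2 h /= => ->; rewrite ?mulr0.
- by have := hQ (i - m)%N (j - l)%N; rewrite /coef2 h orbT => ->; rewrite ?mulr0.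
Qed.

Lemma bdegD m1 m2 P Q : bdeg m1 m2 P -> bdeg m1 m2 Q -> bdeg m1 m2 (P + Q).
Proof. by move=> hP hQ i j h; rewrite /coef2 !coefD -/(coef2 P i j) -/(coef2 Q i j) hP ?hQ ?addr0. Qed.

Lemma bdegW m1 m2 n1 n2 P : (m1 <= n1)%N -> (m2 <= n2)%N -> bdeg m1 m2 P -> bdeg n1 n2 P.
Proof. move=> h1 h2 hP i j h; apply: hP; lia. Qed.

Lemma bdeg_cst2 a : bdeg 0 0 (cst2 a).
Proof.
move=> i j h; rewrite /coef2 /cst2 coefC; case: eqP => [hj|_]; last by rewrite coef0.
by rewrite coefC; case: eqP => // hi; move: h; rewrite hi hj.
Qed.

Lemma bdeg_Xz : bdeg 1 0 Xz.
Proof.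
move=> i j h; rewrite /coef2 /Xz coefC; case: eqP => [hj|_]; last by rewrite coef0.
by rewrite coefX; move: h; rewrite hj orbF; case: i => [|[|i]].
Qed.

Lemma bdeg_Yw : bdeg 0 1 Yw.
Proof.
move=> i j h; rewrite /coef2 /Yw coefX; case: j h => [|[|j]] h //=; rewrite ?coef0 //.
by rewrite coef1; case: i h.
Qed.

Lemma bdeg1 : bdeg 0 0 1.
Proof. by rewrite -(rmorph1 (polyC \o polyC)); apply: bdeg_cst2. Qed.

Lemma bdegX m1 m2 P n : bdeg m1 m2 P -> bdeg (m1 * n) (m2 * n) (P ^+ n).
Proof.
move=> hP; elim: n => [|n IH]; first by rewrite !muln0 expr0; exact: bdeg1.
by rewrite exprS !mulnS; apply: bdegM.
Qed.

Lemma ev_bdeg k P u v : bdeg k k P ->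
  ev P u v = \sum_(j < k.+1) \sum_(i < k.+1) coef2 P i j * u ^+ i * v ^+ j.
Proof.
move=> hP.
have hj j : (k < j)%N -> P`_j = 0.
  by move=> hkj; apply/polyP => i; rewrite coef0; apply: hP; rewrite hkj orbT.
have hs : (size (map_poly (horner_eval u) P) <= k.+1)%N.
  by apply/leq_sizeP => j hkj; rewrite coef_map /= hj // horner_evalE horner0.
rewrite /ev (horner_coef_wide _ hs); apply: eq_bigr => j _.
have hs2 : (size (P`_j)%R <= k.+1)%N by apply/leq_sizeP => i hi; apply: hP; rewrite hi.
rewrite coef_map /= horner_evalE (horner_coef_wide _ hs2) mulr_suml; apply: eq_bigr => i _.
by rewrite /coef2.
Qed.

Definition Hf (a b bc c Z1 Z2 W1 W2 : algC) : algC :=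
  a * Z1 * W1 + b * Z1 * W2 + bc * Z2 * W1 + c * Z2 * W2.

Definition Lterm (a b bc c : algC) : poly2 :=
  cst2 a * Xz * Yw + cst2 b * Xz + cst2 bc * Yw + cst2 c.

Lemma bdeg_L a b bc c : bdeg 1 1 (Lterm a b bc c).
Proof.
rewrite /Lterm; apply: bdegD; [apply: bdegD; [apply: bdegD|]|].
- by have := bdegM (bdegM (bdeg_cst2 a) bdeg_Xz) bdeg_Yw.
- apply: (bdegW (m1 := 1) (m2 := 0)) => //.
  by have := bdegM (bdeg_cst2 b) bdeg_Xz.
- apply: (bdegW (m1 := 0) (m2 := 1)) => //.
  by have := bdegM (bdeg_cst2 bc) bdeg_Yw.
- by apply: (bdegW (m1 := 0) (m2 := 0)) => //; apply: bdeg_cst2.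
Qed.

Lemma ev_L a b bc c u v : ev (Lterm a b bc c) u v = Hf a b bc c u 1 v 1.
Proof. by rewrite /Lterm /Hf !evD !evM !ev_cst2 ev_Xz ev_Yw !mulr1. Qed.

Lemma ev_slash k P (g : 'M[algC]_2) u v :
  ev (slash k P g) u v =
  \sum_(j < k.+1) \sum_(i < k.+1) coef2 P i j *
    (g 0 0 * u + g 0 1) ^+ i * (g 1 0 * u + g 1 1) ^+ (k - i) *
    ((g 0 0)^* * v + (g 0 1)^*) ^+ j * ((g 1 0)^* * v + (g 1 1)^*) ^+ (k - j).
Proof.
rewrite /slash ev_sum; apply: eq_bigr => j _; rewrite ev_sum; apply: eq_bigr => i _.
by rewrite !evM !evX !evD !evM !ev_cst2 ev_Xz ev_Yw.
Qed.

Lemma pow_split (Z1 Z2 : algC) (i k : nat) : (i <= k)%N -> Z2 != 0 ->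
  Z1 ^+ i * Z2 ^+ (k - i) = Z2 ^+ k * (Z1 / Z2) ^+ i.
Proof.
move=> hik hZ; rewrite expr_div_n -{2}(subnKC hik) exprD.
have hZi : Z2 ^+ i != 0 by rewrite expf_neq0.
by field.
Qed.

Lemma term_split (c A B C D : algC) (i j k : nat) : (i <= k)%N -> (j <= k)%N ->
  B != 0 -> D != 0 ->
  c * A ^+ i * B ^+ (k - i) * C ^+ j * D ^+ (k - j) =
  (B * D) ^+ k * (c * (A / B) ^+ i * (C / D) ^+ j).
Proof.
move=> hi hj hB hD.
have eB : B ^+ k = B ^+ i * B ^+ (k - i) by rewrite -exprD subnKC.
have eD : D ^+ k = D ^+ j * D ^+ (k - j) by rewrite -exprD subnKC.
have hBi : B ^+ i != 0 by rewrite expf_neq0.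
have hDj : D ^+ j != 0 by rewrite expf_neq0.
rewrite exprMn eB eD !expr_div_n; field.
by rewrite hBi hDj.
Qed.

Lemma ev_slash_bdeg k P (g : 'M[algC]_2) u v : bdeg k k P ->
  g 1 0 * u + g 1 1 != 0 -> (g 1 0)^* * v + (g 1 1)^* != 0 ->
  ev (slash k P g) u v =
  ((g 1 0 * u + g 1 1) * ((g 1 0)^* * v + (g 1 1)^*)) ^+ k *
  ev P ((g 0 0 * u + g 0 1) / (g 1 0 * u + g 1 1))
       (((g 0 0)^* * v + (g 0 1)^*) / ((g 1 0)^* * v + (g 1 1)^*)).
Proof.
move=> hP hZ hW; rewrite ev_slash (ev_bdeg _ _ hP) mulr_sumr; apply: eq_bigr => j _.
rewrite mulr_sumr; apply: eq_bigr => i _.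
have hi : (i <= k)%N by rewrite -ltnS.
have hj : (j <= k)%N by rewrite -ltnS.
by rewrite term_split.
Qed.

Lemma Hf_div (a b bc c Z1 Z2 W1 W2 : algC) : Z2 != 0 -> W2 != 0 ->
  Z2 * W2 * Hf a b bc c (Z1 / Z2) 1 (W1 / W2) 1 = Hf a b bc c Z1 Z2 W1 W2.
Proof. by move=> hZ hW; rewrite /Hf; field; rewrite hZ hW. Qed.

Lemma ev_slash_L k (g : 'M[algC]_2) a b bc c u v :
  g 1 0 * u + g 1 1 != 0 -> (g 1 0)^* * v + (g 1 1)^* != 0 ->
  ev (slash k (Lterm a b bc c ^+ k) g) u v =
  Hf a b bc c (g 0 0 * u + g 0 1) (g 1 0 * u + g 1 1)
              ((g 0 0)^* * v + (g 0 1)^*) ((g 1 0)^* * v + (g 1 1)^*) ^+ k.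
Proof.
move=> hZ hW.
have hb : bdeg k k (Lterm a b bc c ^+ k).
  by have := bdegX (n := k) (bdeg_L a b bc c); rewrite !mul1n.
by rewrite (ev_slash_bdeg hb hZ hW) evX ev_L -exprMn Hf_div.
Qed.

Lemma pole_ok (ga de u : algC) : (ga != 0) || (de != 0) -> u != - de / ga ->
  ga * u + de != 0.
Proof.
case: (eqVneq ga 0) => [->|hg] /= hd hu; first by rewrite mul0r add0r.
apply: contra hu => /eqP h; apply/eqP.
have -> : de = - (ga * u) by apply/eqP; rewrite -addr_eq0 addrC h.
by field.
Qed.

Lemma ev_scale (c : int) (Q : poly2) u v : ev (c%:~R *: Q) u v = c%:~R * ev Q u v.
Proof. by rewrite -mul_polyC evM ev_polyC horner_int. Qed.

Lemma ev_slashZ k P (s : seq (int * 'M[algC]_2)) u v :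
  ev (slashZ k P s) u v = \sum_(p <- s) p.1%:~R * ev (slash k P p.2) u v.
Proof. by rewrite /slashZ ev_sum; apply: eq_bigr => p _; rewrite ev_scale. Qed.

Local Open Scope classical_set_scope.

Lemma reindex_inv (T : choiceType) (A B : set T) (phi psi : T -> T) (F : T -> algC) :
  (forall t, A t -> B (phi t)) -> (forall t, B t -> A (psi t)) ->
  (forall t, A t -> psi (phi t) = t) -> (forall t, B t -> phi (psi t) = t) ->
  \sum_(t \in B) F t = \sum_(t \in A) F (phi t).
Proof.
move=> hAB hBA hpp hpp'; apply: reindex_fsbig; split.
- by move=> t /hAB.
- move=> s t /set_mem hs /set_mem ht e.
  by rewrite -(hpp s hs) -(hpp t ht) e.
- by move=> t /[dup] hB /hBA hA; exists (psi t) => //; apply: hpp'.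
Qed.

Lemma finite_inv (T : choiceType) (A B : set T) (phi psi : T -> T) :
  (forall t, B t -> A (psi t)) -> (forall t, B t -> phi (psi t) = t) ->
  finite_set A -> finite_set B.
Proof.
move=> hBA hpp' fA; apply: (sub_finite_set (B := phi @` A)); last exact: finite_image.
by move=> t hB; exists (psi t); [apply: hBA | apply: hpp'].
Qed.

Definition Dd (T : Type) (Dc : set T) (v1 v2 : T -> int) : set T :=
  [set t | Dc t /\ (0 < v1 t)%R /\ (v2 t < 0)%R].

Lemma sign_comb (P Q R S : bool) (x : algC) :
  let g b x := if b then x else 0 in
  g (~~ P && Q) (- x) + g (~~ Q && R) (- x) + g (~~ R && S) (- x) - g (~~ P && S) (- x)
  = - (g (P && ~~ Q) x + g (Q && ~~ R) x + g (R && ~~ S) x - g (P && ~~ S) x).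
Proof. by case: P; case: Q; case: R; case: S => /=; ring. Qed.

Lemma sum_neg0 (T : choiceType) (W : set T) (neg : T -> T) (G : T -> algC) :
  finite_set W ->
  (forall t, neg (neg t) = t) -> (forall t, W t -> W (neg t)) ->
  (forall t, W t -> G (neg t) = - G t) -> \sum_(t \in W) G t = 0.
Proof.
move=> fW hnn hW hG.
have e : \sum_(t \in W) G t = \sum_(t \in W) G (neg t).
  by apply: (reindex_inv (psi := neg)) => // t _; rewrite hnn.
have e2 : \sum_(t \in W) G (neg t) = \sum_(t \in W) (- G t).
  by apply: eq_fsbigr => t /set_mem /hG.
have e3 : \sum_(t \in W) (- G t) = - \sum_(t \in W) G t.
  by rewrite !fsbig_finite // sumrN.
rewrite e2 e3 in e.
have : (\sum_(t \in W) G t) *+ 2 == 0 by rewrite mulr2n {1}e addNr.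
by rewrite mulrn_eq0 /= => /eqP.
Qed.

Lemma ltN0 (z : int) : z != 0 -> (z < 0) = ~~ (0 < z).
Proof. move=> h; lia. Qed.

Lemma cocycle4 (T : choiceType) (neg : T -> T) (Dc : set T) (f : T -> algC)
    (vp vq vr vs : T -> int) :
  (forall t, neg (neg t) = t) -> (forall t, Dc t -> Dc (neg t)) ->
  (forall t, f (neg t) = - f t) ->
  (forall t, vp (neg t) = - vp t) -> (forall t, vq (neg t) = - vq t) ->
  (forall t, vr (neg t) = - vr t) -> (forall t, vs (neg t) = - vs t) ->
  (forall t, Dc t -> [/\ vp t != 0, vq t != 0, vr t != 0 & vs t != 0]) ->
  finite_set (Dd Dc vp vq) -> finite_set (Dd Dc vq vr) -> finite_set (Dd Dc vr vs) ->
  \sum_(t \in Dd Dc vp vq) f t + \sum_(t \in Dd Dc vq vr) f t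
    + \sum_(t \in Dd Dc vr vs) f t = \sum_(t \in Dd Dc vp vs) f t.
Proof.
move=> hnn hDn hf hp hq hr hs hnz f1 f2 f3.
set W0 := Dd Dc vp vq `|` Dd Dc vq vr `|` Dd Dc vr vs.
set W := W0 `|` neg @` W0.
have fW0 : finite_set W0 by rewrite /W0 !finite_setU.
have fW : finite_set W by rewrite /W finite_setU; split => //; apply: finite_image.
have W0D t : W0 t -> Dc t by rewrite /W0 /Dd => -[[[]|[]]|[]].
have WD t : W t -> Dc t.
  by case=> [/W0D //|[t' /W0D ht' <-]]; apply: hDn.
have Wneg t : W t -> W (neg t).
  case=> [h|[t' h <-]]; first by right; exists t.
  by left; rewrite hnn.
pose g (v1 v2 : T -> int) t := if (0 < v1 t) && (v2 t < 0) then f t else 0.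
have e v1 v2 : Dd Dc v1 v2 `<=` W ->
    \sum_(t \in Dd Dc v1 v2) f t = \sum_(t \in W) g v1 v2 t.
  move=> hsub; rewrite -(fsbig_widen (Dd Dc v1 v2) W (g v1 v2)) //.
  - apply: eq_fsbigr => t /set_mem [_ [h1 h2]]; by rewrite /g h1 h2.
  - move=> t [/WD hDt hn] /=; rewrite /g; case: ifP => // /andP[h1 h2].
    by case: hn.
rewrite !e.
- rewrite !fsbig_finite //; apply/eqP; rewrite -subr_eq0 -!big_split /= -sumrB.
  rewrite -fsbig_finite //; apply/eqP; apply: (sum_neg0 (neg := neg)) => // t hW.
  have [np nq nr ns] := hnz t (WD t hW).
  rewrite /g hf hp hq hr hs !oppr_gt0 !oppr_lt0 !ltN0 //.
  exact: sign_comb.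
- move=> t [hD [h1 h2]]; left; rewrite /W0.
  have [np nq nr ns] := hnz t hD.
  case: (boolP (0 < vq t)) => hq'.
  + case: (boolP (0 < vr t)) => hr'.
    * by right; split => //; split.
    * by left; right; split => //; split => //; rewrite ltN0.
  + by left; left; split => //; split => //; rewrite ltN0.
- by move=> t h; left; right.
- by move=> t h; left; left; right.
- by move=> t h; left; left; left.
Qed.

Lemma conj_sqrtN (d : nat) : (0 < d)%N ->
  (sqrtC (- d%:R))^* = - sqrtC (- d%:R) :> algC.
Proof.
move=> hd; set r := sqrtC _.
have hr : r ^+ 2 = - d%:R by rewrite sqrtCK.
have hc : (r^*) ^+ 2 = - d%:R by rewrite -rmorphXn hr rmorphN rmorph_nat.
have : (r^* - r) * (r^* + r) = 0.
  have -> : (r^* - r) * (r^* + r) = r^* ^+ 2 - r ^+ 2 by ring.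
  by rewrite hc hr subrr.
move/eqP; rewrite mulf_eq0 => /orP[/eqP h|/eqP h]; last first.
  by apply/eqP; rewrite -addr_eq0 h.
have hre : r \is Num.real by rewrite CrealE -subr_eq0 h.
have := real_exprn_even_ge0 (n := 2) hre isT.
by rewrite hr oppr_ge0 lern0 => /eqP hd0; move: hd; rewrite hd0.
Qed.

Definition sd (d : nat) : int := if (d %% 4 == 3)%N then 1 else 0.
Definition nd (d : nat) : int := if (d %% 4 == 3)%N then ((d.+1) %/ 4)%N%:Z else d%:Z.
Definition dlist := [:: 1; 2; 3; 7; 11]%N.

Lemma omA (d : nat) : (0 < d)%N ->
  (sqrtC (- d%:R))^* = - sqrtC (- d%:R) :> algC /\ sqrtC (- d%:R) ^+ 2 = - d%:R :> algC.
Proof. by move=> h; rewrite conj_sqrtN // sqrtCK. Qed.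

Lemma omega_facts d : d \in dlist ->
  (omega_d d)^* = (sd d)%:~R - omega_d d /\
  (omega_d d) ^+ 2 = (sd d)%:~R * omega_d d - (nd d)%:~R.
Proof.
rewrite !inE => /orP[/eqP->|/orP[/eqP->|/orP[/eqP->|/orP[/eqP->|/eqP->]]]];
  rewrite /omega_d /sd /nd /=.
- have [hc hr] := @omA 1%N isT.
  set r := sqrtC _ in hc hr *.
  split; [rewrite ?rmorphM ?rmorphD ?rmorph1 /= hc ?fmorphV /= ?rmorph_nat; field
         | field: hr] => //.
- have [hc hr] := @omA 2%N isT.
  set r := sqrtC _ in hc hr *.
  split; [rewrite ?rmorphM ?rmorphD ?rmorph1 /= hc ?fmorphV /= ?rmorph_nat; field
         | field: hr] => //.
- have [hc hr] := @omA 3%N isT.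
  have e : (4 %/ 4 = 1)%N by []. rewrite e.
  set r := sqrtC _ in hc hr *.
  split; [rewrite ?rmorphM ?rmorphD ?rmorph1 /= hc ?fmorphV /= ?rmorph_nat; field
         | field: hr] => //.
- have [hc hr] := @omA 7%N isT.
  have e : (8 %/ 4 = 2)%N by []. rewrite e.
  set r := sqrtC _ in hc hr *.
  split; [rewrite ?rmorphM ?rmorphD ?rmorph1 /= hc ?fmorphV /= ?rmorph_nat; field
         | field: hr] => //.
- have [hc hr] := @omA 11%N isT.
  have e : (12 %/ 4 = 3)%N by []. rewrite e.
  set r := sqrtC _ in hc hr *.
  split; [rewrite ?rmorphM ?rmorphD ?rmorph1 /= hc ?fmorphV /= ?rmorph_nat; field
         | field: hr] => //.
Qed.

Definition nf (d : nat) (x y : int) : int := x ^+ 2 + sd d * x * y + nd d * y ^+ 2.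

Lemma dcases d : d \in dlist ->
  (sd d = 0 /\ nd d = 1) \/ (sd d = 0 /\ nd d = 2) \/ (sd d = 1 /\ nd d = 1) \/
  (sd d = 1 /\ nd d = 2) \/ (sd d = 1 /\ nd d = 3).
Proof.
rewrite !inE => /orP[/eqP->|/orP[/eqP->|/orP[/eqP->|/orP[/eqP->|/eqP->]]]];
  rewrite /sd /nd /=; [left|right;left|right;right;left|right;right;right;left|right;right;right;right];
  split => //.
Qed.

Lemma conj_Oel d x y : d \in dlist -> (Oel d x y)^* = Oel d (x + sd d * y) (- y).
Proof.
move=> hd; have [hc hs] := omega_facts hd.
rewrite /Oel rmorphD rmorphM /=. rewrite hc !rmorph_int.
rewrite !(intrD, intrM, intrN); ring.
Qed.

Lemma normK_Oel d x y : d \in dlist -> normK (Oel d x y) = (nf d x y)%:~R.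
Proof.
move=> hd; have [hc hs] := omega_facts hd.
rewrite /normK conj_Oel // /Oel /nf !(intrD, intrM, intrN, rmorphXn).
ring: hs.
Qed.

Lemma Oel_mul d x y x' y' : d \in dlist ->
  Oel d x y * Oel d x' y' = Oel d (x * x' - nd d * y * y') (x * y' + y * x' + sd d * y * y').
Proof.
move=> hd; have [hc hs] := omega_facts hd.
rewrite /Oel !(intrD, intrM, intrN, intrB); ring: hs.
Qed.

Lemma Oel_inj d x y x' y' : d \in dlist -> Oel d x y = Oel d x' y' -> x = x' /\ y = y'.
Proof.
move=> hd; have [hc hs] := omega_facts hd.
move=> e.
have ey : y = y'.
  apply/eqP; rewrite -(eqr_int algC) -subr_eq0; apply/eqP.
  have e2 := congr1 (fun z => z^*) e; rewrite /= !conj_Oel // in e2.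
  have : (y%:~R - y'%:~R) * (2 * omega_d d - (sd d)%:~R) = 0 :> algC.
    move: e e2; rewrite /Oel !(intrD, intrM, intrN) => e e2.
    have -> : (y%:~R - y'%:~R) * (2 * omega_d d - (sd d)%:~R) =
      (x%:~R + y%:~R * omega_d d - (x'%:~R + y'%:~R * omega_d d)) -
      ((x%:~R + (sd d)%:~R * y%:~R + - y%:~R * omega_d d) -
       (x'%:~R + (sd d)%:~R * y'%:~R + - y'%:~R * omega_d d)) :> algC by ring.
    by rewrite e e2 !subrr.
  move/eqP; rewrite mulf_eq0 => /orP[/eqP //|/eqP h].
  exfalso.
  have h2 : (2 * omega_d d - (sd d)%:~R) ^+ 2 = ((sd d) ^+ 2 - 4 * nd d)%:~R :> algC.
    rewrite !(intrD, intrM, intrN, intrB, rmorphXn) /=; ring: hs.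
  rewrite h expr0n /= in h2.
  have : (sd d ^+ 2 - 4 * nd d) == 0 by rewrite -(eqr_int algC) -h2.
  by case: (dcases hd) => [[->->]|[[->->]|[[->->]|[[->->]|[->->]]]]].
split => //; move: e; rewrite /Oel ey => /addIr /eqP; by rewrite eqr_int => /eqP.
Qed.

Notation U := (int * int * int * int)%type.

Definition va (t : U) : int := t.1.1.1.
Definition vc (t : U) : int := t.1.1.2.
Definition Disc (d Delta : nat) : set U :=
  [set t | nf d t.1.2 t.2 - va t * vc t = Delta%:Z].

Lemma Pindex_eq d Delta : d \in dlist -> Pindex d Delta = Dd (Disc d Delta) va vc.
Proof.
move=> hd.
have e x y a c : (normK (Oel d x y) - (a * c)%:~R = Delta%:R :> algC) <-> (nf d x y - a * c = Delta).
  rewrite normK_Oel // -intrB pmulrn; split => [/eqP|->] //.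
  by rewrite eqr_int => /eqP.
apply/seteqP; split => -[[[a c] x] y]; rewrite /Dd /Disc /va /vc /=.
- by move=> [/e h1 [h2 h3]].
- by move=> [h1 [h2 h3]]; split; [apply/e|].
Qed.

Lemma nf_ge0 d x y : d \in dlist -> 0 <= nf d x y.
Proof.
by move=> hd; rewrite /nf; case: (dcases hd) => [[->->]|[[->->]|[[->->]|[[->->]|[->->]]]]]; nia.
Qed.

Lemma boundA d Delta t : d \in dlist -> (0 < Delta)%N -> Dd (Disc d Delta) va vc t ->
  let M := (2 * Delta%:Z) in
  [/\ -M <= va t <= M, -M <= vc t <= M, -M <= t.1.2 <= M & -M <= t.2 <= M].
Proof.
move=> hd hD; case: t => [[[a c] x] y]; rewrite /Dd /Disc /va /vc /= => -[h1 [h2 h3]].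
have hD' : 1 <= Delta%:Z by lia.
move: h1; rewrite /nf.
case: (dcases hd) => [[->->]|[[->->]|[[->->]|[[->->]|[->->]]]]] h1.
- have h5 : 0 < - (a*c) by nia.
  have h6 : y^+2 <= 4*Delta%:Z by nia.
  have h7 : (2*x)^+2 <= 4*Delta%:Z by nia.
  have h8 : -(2*Delta%:Z) <= y <= 2*Delta%:Z by nia.
  have h9 : -(2*Delta%:Z) <= 2*x <= 2*Delta%:Z by nia.
  split; nia.
- have h5 : 0 < - (a*c) by nia.
  have h6 : y^+2 <= 4*Delta%:Z by nia.
  have h7 : (2*x)^+2 <= 4*Delta%:Z by nia.
  have h8 : -(2*Delta%:Z) <= y <= 2*Delta%:Z by nia.
  have h9 : -(2*Delta%:Z) <= 2*x <= 2*Delta%:Z by nia.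
  split; nia.
- have h5 : 0 < - (a*c) by nia.
  have h6 : y^+2 <= 4*Delta%:Z by nia.
  have h7 : (2*x+y)^+2 <= 4*Delta%:Z by nia.
  have h8 : -(2*Delta%:Z) <= y <= 2*Delta%:Z by nia.
  have h9 : -(2*Delta%:Z) <= 2*x+y <= 2*Delta%:Z by nia.
  split; nia.
- have h5 : 0 < - (a*c) by nia.
  have h6 : y^+2 <= 4*Delta%:Z by nia.
  have h7 : (2*x+y)^+2 <= 4*Delta%:Z by nia.
  have h8 : -(2*Delta%:Z) <= y <= 2*Delta%:Z by nia.
  have h9 : -(2*Delta%:Z) <= 2*x+y <= 2*Delta%:Z by nia.
  split; nia.
- have h5 : 0 < - (a*c) by nia.
  have h6 : y^+2 <= 4*Delta%:Z by nia.
  have h7 : (2*x+y)^+2 <= 4*Delta%:Z by nia.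
  have h8 : -(2*Delta%:Z) <= y <= 2*Delta%:Z by nia.
  have h9 : -(2*Delta%:Z) <= 2*x+y <= 2*Delta%:Z by nia.
  split; nia.
Qed.

Definition Rng (M : nat) : set int := [set z | - M%:Z <= z <= M%:Z].

Lemma finite_Rng M : finite_set (Rng M).
Proof.
apply: (sub_finite_set (B := (fun i : nat => i%:Z - M%:Z) @` [set` iota 0 (M + M).+1])).
  move=> z; rewrite /Rng /= => hz; exists (absz (z + M%:Z)); last by rewrite /=; lia.
  by rewrite -[0%N :: _]/(iota 0 (M + M).+1) mem_iota; lia.
exact/finite_image/finite_seq.
Qed.

Lemma finA d Delta : d \in dlist -> (0 < Delta)%N -> finite_set (Dd (Disc d Delta) va vc).
Proof.
move=> hd hD.
apply: (sub_finite_set (B := ((Rng (2 * Delta) `*` Rng (2 * Delta)) `*` Rng (2 * Delta)) `*` Rng (2 * Delta))).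
  move=> t ht; have [h1 h2 h3 h4] := boundA hd hD ht.
  move: t ht h1 h2 h3 h4 => [[[a c] x] y] _; rewrite /va /vc /Rng /= => h1 h2 h3 h4.
  by rewrite /setX /= !PoszM; split; [split; [split|]|].
by apply: finite_setX; [apply: finite_setX; [apply: finite_setX|]|]; apply: finite_Rng.
Qed.

Definition bO d (t : U) : algC := Oel d t.1.2 t.2.
Definition Fv d (t : U) (u v : algC) : algC :=
  Hf (va t)%:~R (bO d t) (bO d t)^* (vc t)%:~R u 1 v 1.

Lemma Pterm_L d k t : Pterm d k t = Lterm (va t)%:~R (bO d t) (bO d t)^* (vc t)%:~R ^+ k.
Proof. by case: t => [[[a c] x] y]. Qed.

Definition Aset d Delta := Dd (Disc d Delta) va vc.

Lemma coef2_sum (I : Type) (r : seq I) (F : I -> poly2) i j :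
  coef2 (\sum_(s <- r) F s) i j = \sum_(s <- r) coef2 (F s) i j.
Proof. by rewrite /coef2 !coef_sum. Qed.

Lemma slash_sum (I : Type) (r : seq I) (F : I -> poly2) k g u v :
  ev (slash k (\sum_(s <- r) F s) g) u v = \sum_(s <- r) ev (slash k (F s) g) u v.
Proof.
rewrite ev_slash.
under eq_bigr => j _ do under eq_bigr => i _ do rewrite coef2_sum -!mulrA mulr_suml.
under eq_bigr => j _ do rewrite exchange_big /=.
rewrite exchange_big /=.
apply: eq_bigr => s _; rewrite ev_slash; apply: eq_bigr => j _; apply: eq_bigr => i _.
by rewrite -!mulrA.
Qed.

Lemma lin_fsum (T : choiceType) (A : set T) (L : poly2 -> algC) (F : T -> poly2)
    (G : T -> algC) :
  (forall P Q, L (P + Q) = L P + L Q) -> L 0 = 0 ->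
  finite_set A -> (forall t, A t -> L (F t) = G t) ->
  L (\sum_(t \in A) F t) = \sum_(t \in A) G t.
Proof.
move=> hD h0 fA h; rewrite !fsbig_finite // big_seq [RHS]big_seq.
apply: (big_ind2 (fun (P : poly2) (w : algC) => L P = w)) => //.
- by move=> P1 P2 w1 w2 /= <- <-.
- by move=> t /=; rewrite in_fset_set // inE => /h.
Qed.

Lemma ev_P d k Delta u v : d \in dlist -> (0 < Delta)%N ->
  ev (P_kD d k Delta) u v = \sum_(t \in Aset d Delta) (Fv d t u v) ^+ k.
Proof.
move=> hd hD; rewrite /P_kD Pindex_eq //.
apply: (lin_fsum (L := fun P => ev P u v)) => //.
- by move=> P Q; rewrite evD.
- by rewrite ev0.
- exact: finA.
- by move=> t _; rewrite Pterm_L evX ev_L.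
Qed.

Lemma ev_slash_P d k Delta g u v : d \in dlist -> (0 < Delta)%N ->
  ev (slash k (P_kD d k Delta) g) u v =
  \sum_(t \in Aset d Delta) ev (slash k (Pterm d k t) g) u v.
Proof.
move=> hd hD; rewrite /P_kD Pindex_eq //.
apply: (lin_fsum (L := fun P => ev (slash k P g) u v)) => //.
- move=> P Q; have := slash_sum [:: P; Q] id k g u v.
  by rewrite !big_cons !big_nil !addr0.
- by have := slash_sum [::] id k g u v; rewrite !big_nil.
- exact: finA.
Qed.

Lemma mx2E a b c e : [/\ mx2 a b c e 0 0 = a, mx2 a b c e 0 1 = b,
  mx2 a b c e 1 0 = c & mx2 a b c e 1 1 = e].
Proof. by rewrite /mx2 !mxE. Qed.

Lemma mx2_mul a b c e a' b' c' e' :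
  mx2 a b c e *m mx2 a' b' c' e' =
  mx2 (a * a' + b * c') (a * b' + b * e') (c * a' + e * c') (c * b' + e * e').
Proof.
apply/matrixP => i j; rewrite !mxE !big_ord_recr big_ord0 /= add0r !mxE.
by case: i => [[|[|i]] hi] //; case: j => [[|[|j]] hj].
Qed.

Lemma oneM_mx2 : oneM = mx2 1 0 0 1.
Proof.
apply/matrixP => i j; rewrite /oneM !mxE.
by case: i => [[|[|i]] hi] //; case: j => [[|[|j]] hj].
Qed.

Lemma ev_slash_mx2 d k t a b c e u v :
  c * u + e != 0 -> c^* * v + e^* != 0 ->
  ev (slash k (Pterm d k t) (mx2 a b c e)) u v =
  Hf (va t)%:~R (bO d t) (bO d t)^* (vc t)%:~R
     (a * u + b) (c * u + e) (a^* * v + b^*) (c^* * v + e^*) ^+ k.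
Proof.
have [h1 h2 h3 h4] := mx2E a b c e.
move=> hZ hW.
have hZ' : mx2 a b c e 1 0 * u + mx2 a b c e 1 1 != 0 by rewrite h3 h4.
have hW' : (mx2 a b c e 1 0)^* * v + (mx2 a b c e 1 1)^* != 0 by rewrite h3 h4.
by rewrite Pterm_L (ev_slash_L _ _ _ _ _ hZ' hW') h1 h2 h3 h4.
Qed.

Definition negU (t : U) : U := (- va t, - vc t, - t.1.2, - t.2).

Lemma Fv_neg d t u v : Fv d (negU t) u v = - Fv d t u v.
Proof.
case: t => [[[a c] x] y]; rewrite /Fv /bO /va /vc /negU /Hf /Oel /=.
rewrite !(intrN, rmorphD, rmorphN, rmorphM) /=; ring.
Qed.

Lemma oddpowN (x : algC) k : odd k -> (- x) ^+ k = - x ^+ k.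
Proof. by move=> hk; rewrite exprNn -signr_odd hk expr1 mulN1r. Qed.

Definition xU (t : U) : int := t.1.2.
Definition yU (t : U) : int := t.2.

Lemma reindex_D d Delta (phi psi : U -> U) (v1 v2 : U -> int) (F : U -> algC) :
  (forall t, Disc d Delta t -> Disc d Delta (phi t)) ->
  (forall t, Disc d Delta t -> Disc d Delta (psi t)) ->
  (forall t, v1 (phi t) = va t) -> (forall t, v2 (phi t) = vc t) ->
  (forall t, va (psi t) = v1 t) -> (forall t, vc (psi t) = v2 t) ->
  (forall t, psi (phi t) = t) -> (forall t, phi (psi t) = t) ->
  d \in dlist -> (0 < Delta)%N ->
  \sum_(t \in Dd (Disc d Delta) v1 v2) F t = \sum_(t \in Aset d Delta) F (phi t) /\
  finite_set (Dd (Disc d Delta) v1 v2).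
Proof.
move=> hphi hpsi h1 h2 h3 h4 hpp hpp' hd hD.
have hAB t : Aset d Delta t -> Dd (Disc d Delta) v1 v2 (phi t).
  by move=> [hDt [ha hc]]; split; [apply: hphi | rewrite h1 h2].
have hBA t : Dd (Disc d Delta) v1 v2 t -> Aset d Delta (psi t).
  by move=> [hDt [ha hc]]; split; [apply: hpsi | rewrite h3 h4].
split.
- by apply: (reindex_inv (psi := psi)) => // t _.
- by apply: (finite_inv (A := Aset d Delta) (psi := psi)) => // ; exact: finA.
Qed.

Lemma hnormZ d Delta : d \in dlist ->
  (forall b : algC, in_Od d b -> normK b != Delta%:R) -> forall x y, nf d x y != Delta%:Z.
Proof.
move=> hd hn x y; have := hn (Oel d x y) (ex_intro _ x (ex_intro _ y erefl)).
by rewrite normK_Oel // pmulrn eqr_int.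
Qed.

Lemma Disc_nz d Delta t : d \in dlist -> (forall x y, nf d x y != Delta%:Z) ->
  Disc d Delta t -> va t != 0 /\ vc t != 0.
Proof.
move=> hd hn; case: t => [[[a c] x] y]; rewrite /Disc /va /vc /= => h.
split; apply/eqP => h0; move: h; rewrite h0 ?mul0r ?mulr0 subr0 => h; by move: (hn x y); rewrite h eqxx.
Qed.

Lemma Disc_neg d Delta t : Disc d Delta t -> Disc d Delta (negU t).
Proof.
case: t => [[[a c] x] y]; rewrite /Disc /va /vc /negU /nf /= => <-; ring.
Qed.

Lemma negUK t : negU (negU t) = t.
Proof. by case: t => [[[a c] x] y]; rewrite /negU /va /vc /= !opprK. Qed.

Lemma empty_fin (v : U -> int) (D : set U) : finite_set (Dd D v v).
Proof.
apply: (sub_finite_set (B := set0)); last exact: finite_set0.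
move=> t [_ [h1 h2]]; move: h1 h2; lia.
Qed.

Definition phiS d (t : U) : U := (vc t, va t, - xU t - sd d * yU t, yU t).

Lemma hf_one d t u v :
  Hf (va t)%:~R (bO d t) (bO d t)^* (vc t)%:~R (1 * u + 0) (0 * u + 1)
     (1^* * v + 0^*) (0^* * v + 1^*) = Fv d t u v.
Proof. by rewrite /Fv rmorph0 rmorph1 /Hf; ring. Qed.

Lemma hf_S d t u v : d \in dlist ->
  Hf (va t)%:~R (bO d t) (bO d t)^* (vc t)%:~R (0 * u + -1) (1 * u + 0)
     (0^* * v + (-1)^*) (1^* * v + 0^*) = Fv d (phiS d t) u v.
Proof.
move=> hd; case: t => [[[a c] x] y].
rewrite /Fv /bO /phiS /va /vc /xU /yU /= !conj_Oel // /Oel rmorph0 rmorphN rmorph1 /Hf.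
rewrite !(intrD, intrM, intrN); ring.
Qed.

Lemma fodd d k u v : odd k -> forall t, Fv d (negU t) u v ^+ k = - (Fv d t u v ^+ k).
Proof. by move=> hk t; rewrite Fv_neg oddpowN. Qed.


Lemma cj0 : (0 : algC)^* = 0. Proof. exact: rmorph0. Qed.
Lemma cj1 : (1 : algC)^* = 1. Proof. exact: rmorph1. Qed.
Lemma cjN1 : (-1 : algC)^* = -1. Proof. by rewrite rmorphN rmorph1. Qed.

Lemma phiS_disc d Delta t : Disc d Delta t -> Disc d Delta (phiS d t).
Proof.
case: t => [[[a c] x] y]; rewrite /Disc /phiS /va /vc /xU /yU /nf /= => <-; ring.
Qed.

Lemma phiS_inv d t : phiS d (phiS d t) = t.
Proof.
case: t => [[[a c] x] y]; rewrite /phiS /va /vc /xU /yU /=; congr (_, _, _, _); ring.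
Qed.

Lemma part3 d k Delta : d \in dlist -> odd k -> (0 < Delta)%N ->
  (forall x y, nf d x y != Delta%:Z) ->
  slashZ k (P_kD d k Delta) [:: (1%:Z, oneM); (1%:Z, SM)] = 0.
Proof.
move=> hd hk hD hn.
apply: (ev_eq0 (bu := [:: 0]) (bv := [:: 0])) => u v hu hv.
rewrite !inE in hu hv.
rewrite ev_slashZ !big_cons big_nil /= addr0 !mulr1z oneM_mx2 /SM.
rewrite (ev_slash_P k (mx2 1 0 0 1) u v hd hD) (ev_slash_P k (mx2 0 (-1) 1 0) u v hd hD).
rewrite !mul1r.
set f := fun t => Fv d t u v ^+ k.
have e1 : \sum_(t \in Aset d Delta) ev (slash k (Pterm d k t) (mx2 1 0 0 1)) u v =
          \sum_(t \in Aset d Delta) f t.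
  apply: eq_fsbigr => t _; rewrite ev_slash_mx2.
  - by rewrite hf_one.
  - by rewrite mul0r add0r; exact: oner_neq0.
  - by rewrite cj0 cj1 mul0r add0r; exact: oner_neq0.
have e2 : \sum_(t \in Aset d Delta) ev (slash k (Pterm d k t) (mx2 0 (-1) 1 0)) u v =
          \sum_(t \in Aset d Delta) f (phiS d t).
  apply: eq_fsbigr => t _; rewrite ev_slash_mx2.
  - by rewrite (hf_S _ _ _ hd).
  - by rewrite mul1r addr0.
  - by rewrite cj0 cj1 mul1r addr0.
apply: (etrans (f_equal2 (fun a b => a + b) e1 e2)).
have [e3 fin3] := reindex_D f (@phiS_disc d Delta) (@phiS_disc d Delta)
  (v1 := vc) (v2 := va) (fun t => erefl) (fun t => erefl) (fun t => erefl) (fun t => erefl)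
  (phiS_inv d) (phiS_inv d) hd hD.
rewrite -e3.
have hz t : Disc d Delta t -> [/\ va t != 0, vc t != 0, va t != 0 & va t != 0].
  by move=> /(Disc_nz hd hn) [h1 h2].
have := cocycle4 (f := f) (@negUK) (@Disc_neg d Delta) (fodd d u v hk)
  (fun t => erefl) (fun t => erefl) (fun t => erefl) (fun t => erefl) hz
  (finA hd hD) fin3 (empty_fin _ _).
by move/eqP; rewrite -subr_eq0 addrK => /eqP.
Qed.

Definition phiT d (t : U) : U :=
  (va t, va t + vc t + 2 * xU t + sd d * yU t, xU t + va t, yU t).
Definition psiT d (t : U) : U :=
  (va t, va t + vc t - 2 * xU t - sd d * yU t, xU t - va t, yU t).
Definition phi2 d (t : U) : U :=
  (va t + vc t + 2 * xU t + sd d * yU t, va t, va t + xU t + sd d * yU t, - yU t).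
Definition psi2 d (t : U) : U :=
  (vc t, va t + vc t - 2 * xU t - sd d * yU t, xU t - vc t + sd d * yU t, - yU t).
Definition vm1 d (t : U) : int := va t + vc t - 2 * xU t - sd d * yU t.

Ltac tcase t := case: t => [[[a c] x] y]; rewrite /phiT /psiT /phi2 /psi2 /vm1 /Disc /va /vc /xU /yU /nf /negU /=.

Lemma phiT_disc d Delta t : Disc d Delta t -> Disc d Delta (phiT d t).
Proof. tcase t => <-; ring. Qed.
Lemma psiT_disc d Delta t : Disc d Delta t -> Disc d Delta (psiT d t).
Proof. tcase t => <-; ring. Qed.
Lemma phi2_disc d Delta t : Disc d Delta t -> Disc d Delta (phi2 d t).
Proof. tcase t => <-; ring. Qed.
Lemma psi2_disc d Delta t : Disc d Delta t -> Disc d Delta (psi2 d t).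
Proof. tcase t => <-; ring. Qed.
Lemma phiT_inv d t : psiT d (phiT d t) = t.
Proof. tcase t; congr (_, _, _, _); ring. Qed.
Lemma phiT_inv' d t : phiT d (psiT d t) = t.
Proof. tcase t; congr (_, _, _, _); ring. Qed.
Lemma phi2_inv d t : psi2 d (phi2 d t) = t.
Proof. tcase t; congr (_, _, _, _); ring. Qed.
Lemma phi2_inv' d t : phi2 d (psi2 d t) = t.
Proof. tcase t; congr (_, _, _, _); ring. Qed.
Lemma vm1_phiT d t : vm1 d (phiT d t) = vc t.
Proof. tcase t; ring. Qed.
Lemma vm1_phi2 d t : vm1 d (phi2 d t) = vc t.
Proof. tcase t; ring. Qed.
Lemma vc_psiT d t : vc (psiT d t) = vm1 d t.
Proof. by tcase t. Qed.
Lemma vc_psi2 d t : vc (psi2 d t) = vm1 d t.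
Proof. by tcase t. Qed.
Lemma vm1_neg d t : vm1 d (negU t) = - vm1 d t.
Proof. tcase t; ring. Qed.

Lemma hf_T d t u v : d \in dlist ->
  Hf (va t)%:~R (bO d t) (bO d t)^* (vc t)%:~R (1 * u + 1) (0 * u + 1)
     (1^* * v + 1^*) (0^* * v + 1^*) = Fv d (phiT d t) u v.
Proof.
move=> hd; case: t => [[[a c] x] y].
rewrite /Fv /bO /phiT /va /vc /xU /yU /= !conj_Oel // /Oel cj0 cj1 /Hf.
rewrite !(intrD, intrM, intrN); ring.
Qed.

Lemma hf_2 d t u v : d \in dlist ->
  Hf (va t)%:~R (bO d t) (bO d t)^* (vc t)%:~R (-1 * u + -1) (-1 * u + 0)
     ((-1)^* * v + (-1)^*) ((-1)^* * v + 0^*) = Fv d (phi2 d t) u v.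
Proof.
move=> hd; case: t => [[[a c] x] y].
rewrite /Fv /bO /phi2 /va /vc /xU /yU /= !conj_Oel // /Oel cj0 cjN1 /Hf.
rewrite !(intrD, intrM, intrN); ring.
Qed.

Lemma TSe : TM *m SM *m epsM = mx2 (-1) (-1) (-1) 0.
Proof. rewrite /TM /SM /epsM !mx2_mul; congr mx2; ring. Qed.

Lemma part4 d k Delta : d \in dlist -> odd k -> (0 < Delta)%N ->
  (forall x y, nf d x y != Delta%:Z) ->
  slashZ k (P_kD d k Delta) [:: (1%:Z, oneM); (1%:Z, TM *m SM *m epsM); (- 1%:Z, TM)] = 0.
Proof.
move=> hd hk hD hn.
apply: (ev_eq0 (bu := [:: 0]) (bv := [:: 0])) => u v hu hv.
rewrite !inE in hu hv.
rewrite ev_slashZ !big_cons big_nil /= addr0 !mulr1z oneM_mx2 TSe /TM.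
rewrite (ev_slash_P k (mx2 1 0 0 1) u v hd hD) (ev_slash_P k (mx2 (-1) (-1) (-1) 0) u v hd hD).
rewrite (ev_slash_P k (mx2 1 1 0 1) u v hd hD).
rewrite !mul1r mulrNz mulr1z mulN1r.
set f := fun t => Fv d t u v ^+ k.
have e1 : \sum_(t \in Aset d Delta) ev (slash k (Pterm d k t) (mx2 1 0 0 1)) u v =
          \sum_(t \in Aset d Delta) f t.
  apply: eq_fsbigr => t _; rewrite ev_slash_mx2.
  - by rewrite hf_one.
  - by rewrite mul0r add0r; exact: oner_neq0.
  - by rewrite cj0 cj1 mul0r add0r; exact: oner_neq0.
have e2 : \sum_(t \in Aset d Delta) ev (slash k (Pterm d k t) (mx2 (-1) (-1) (-1) 0)) u v =
          \sum_(t \in Aset d Delta) f (phi2 d t).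
  apply: eq_fsbigr => t _; rewrite ev_slash_mx2.
  - by rewrite (hf_2 _ _ _ hd).
  - by rewrite addr0 mulN1r oppr_eq0.
  - by rewrite cj0 cjN1 addr0 mulN1r oppr_eq0.
have e3 : \sum_(t \in Aset d Delta) ev (slash k (Pterm d k t) (mx2 1 1 0 1)) u v =
          \sum_(t \in Aset d Delta) f (phiT d t).
  apply: eq_fsbigr => t _; rewrite ev_slash_mx2.
  - by rewrite (hf_T _ _ _ hd).
  - by rewrite mul0r add0r; exact: oner_neq0.
  - by rewrite cj0 cj1 mul0r add0r; exact: oner_neq0.
apply: (etrans (f_equal2 (fun a b => a + b) e1 (f_equal2 (fun a b => a - b) e2 e3))).
have [r2 fin2] := reindex_D f (@phi2_disc d Delta) (@psi2_disc d Delta)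
  (v1 := vc) (v2 := vm1 d) (fun t => erefl) (vm1_phi2 d) (fun t => erefl) (vc_psi2 d)
  (phi2_inv d) (phi2_inv' d) hd hD.
have [rT finT] := reindex_D f (@phiT_disc d Delta) (@psiT_disc d Delta)
  (v1 := va) (v2 := vm1 d) (fun t => erefl) (vm1_phiT d) (fun t => erefl) (vc_psiT d)
  (phiT_inv d) (phiT_inv' d) hd hD.
rewrite -r2 -rT.
have hz t : Disc d Delta t -> [/\ va t != 0, vc t != 0, vm1 d t != 0 & vm1 d t != 0].
  move=> ht; have [h1 h2] := Disc_nz hd hn ht.
  have [_ h3] := Disc_nz hd hn (psiT_disc ht).
  by rewrite vc_psiT in h3.
have := cocycle4 (f := f) (@negUK) (@Disc_neg d Delta) (fodd d u v hk)
  (fun t => erefl) (fun t => erefl) (vm1_neg d) (vm1_neg d) hz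
  (finA hd hD) fin2 (empty_fin _ _).
move=> h.
have h0 : \sum_(t \in Dd (Disc d Delta) (vm1 d) (vm1 d)) f t = 0.
  by apply: fsbig1 => t [_ [h1 h2]]; exfalso; move: h1 h2; lia.
rewrite h0 addr0 in h; rewrite -h; ring.
Qed.

Lemma ev_subst2 P f g u v : ev (subst2 P f g) u v = ev P (ev f u v) (ev g u v).
Proof.
rewrite /subst2 ev_sum ev_coef; apply: eq_bigr => j _.
rewrite ev_sum; apply: eq_bigr => i _.
by rewrite !evM !evX ev_cst2.
Qed.

Definition cjU d (t : U) : U := (va t, vc t, xU t + sd d * yU t, - yU t).

Lemma Fv_cjU d t u v : d \in dlist -> Fv d (cjU d t) u v = Fv d t v u.
Proof.
move=> hd; case: t => [[[a c] x] y].
rewrite /Fv /bO /cjU /va /vc /xU /yU /= !conj_Oel // /Oel /Hf.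
rewrite !(intrD, intrM, intrN); ring.
Qed.

Lemma cjU_A d Delta t : Aset d Delta t -> Aset d Delta (cjU d t).
Proof.
case: t => [[[a c] x] y]; rewrite /Aset /Dd /Disc /cjU /va /vc /xU /yU /nf /= => -[<- h].
by split => //; ring.
Qed.

Lemma cjU_inv d t : cjU d (cjU d t) = t.
Proof.
case: t => [[[a c] x] y]; rewrite /cjU /va /vc /xU /yU /=; congr (_, _, _, _); ring.
Qed.

Lemma part1 d k Delta : d \in dlist -> (0 < Delta)%N ->
  subst2 (P_kD d k Delta) Yw Xz = P_kD d k Delta.
Proof.
move=> hd hD; apply: (ev_eq (bu := [::]) (bv := [::])) => u v _ _.
rewrite ev_subst2 ev_Yw ev_Xz !ev_P //.
rewrite [RHS](reindex_inv (A := Aset d Delta) (phi := cjU d) (psi := cjU d)).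
- by apply: eq_fsbigr => t _; rewrite Fv_cjU.
- exact: cjU_A.
- exact: cjU_A.
- by move=> t _; rewrite cjU_inv.
- by move=> t _; rewrite cjU_inv.
Qed.

Definition mulU d (p q : int) (t : U) : U :=
  (va t, vc t, xU t * p - nd d * yU t * q, xU t * q + yU t * p + sd d * yU t * q).

Lemma bO_mulU d p q t : d \in dlist -> bO d (mulU d p q t) = bO d t * Oel d p q.
Proof. by move=> hd; rewrite /bO /mulU /= Oel_mul. Qed.

Lemma normKM (a b : algC) : normK (a * b) = normK a * normK b.
Proof. by rewrite /normK rmorphM /=; ring. Qed.

Lemma mulU_inv d p q p' q' t : d \in dlist -> Oel d p q * Oel d p' q' = 1 ->
  mulU d p' q' (mulU d p q t) = t.
Proof.
move=> hd h.
have e : bO d (mulU d p' q' (mulU d p q t)) = bO d t.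
  by rewrite !bO_mulU // -mulrA h mulr1.
case: t e => [[[a c] x] y]; rewrite /bO /= => /(Oel_inj hd) [e1 e2].
by rewrite /mulU /va /vc /xU /yU /= in e1 e2 *; rewrite e1 e2.
Qed.

Lemma mulU_A d Delta p q t : d \in dlist -> normK (Oel d p q) = 1 ->
  Aset d Delta t -> Aset d Delta (mulU d p q t).
Proof.
move=> hd hN [hDt hs]; split => //; move: hDt; rewrite /Disc /= => <-.
congr (_ - _); apply/eqP; rewrite -(eqr_int algC) -!normK_Oel //.
by have := bO_mulU p q t hd; rewrite /bO /mulU /= => ->; rewrite normKM hN mulr1.
Qed.

Lemma part2 d k Delta : d \in dlist -> (0 < Delta)%N ->
  forall u0 : algC, unit_Od d u0 ->
  subst2 (P_kD d k Delta) (cst2 u0 * Xz) (cst2 u0^* * Yw) = P_kD d k Delta.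
Proof.
move=> hd hD u0 [[p [q ->]] [v0 [[p' [q' ->]] huv]]].
have hN : normK (Oel d p q) = 1.
  have h1 : normK (Oel d p q) * normK (Oel d p' q') = 1.
    by rewrite -normKM huv /normK rmorph1 mulr1.
  rewrite !normK_Oel // -intrM in h1.
  have h2 : nf d p q * nf d p' q' == 1 by rewrite -(eqr_int algC) h1 mulr1z.
  have h3 := nf_ge0 p q hd; have h4 := nf_ge0 p' q' hd.
  have h5 : nf d p q = 1.
    move: h3 h4 h2; case: (nf d p q) => [n|n] // _; case: (nf d p' q') => [m|m] // _.
    by rewrite -PoszM => /eqP [] /eqP; rewrite muln_eq1 => /andP[/eqP -> _].
  by rewrite normK_Oel // h5 mulr1z.
have hvu : Oel d p' q' * Oel d p q = 1 by rewrite mulrC.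
have hN1 : Oel d p q * (Oel d p q)^* = 1 by exact: hN.
apply: (ev_eq (bu := [::]) (bv := [::])) => u v _ _.
rewrite ev_subst2 !evM !ev_cst2 ev_Xz ev_Yw !ev_P //.
rewrite [RHS](reindex_inv (A := Aset d Delta) (phi := mulU d p q) (psi := mulU d p' q')).
- apply: eq_fsbigr => t _; congr (_ ^+ _).
  rewrite /Fv bO_mulU // rmorphM /Hf /=.
  by ring: hN1.
- by move=> t; apply: mulU_A.
- move=> t; apply: mulU_A => //.
  have h1 : normK (Oel d p q) * normK (Oel d p' q') = 1.
    by rewrite -normKM huv /normK rmorph1 mulr1.
  by rewrite hN mul1r in h1.
- by move=> t _; rewrite mulU_inv.
- by move=> t _; rewrite mulU_inv.
Qed.

Lemma invmx_mx2 (a b c e : algC) : a * e - b * c = 1 ->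
  invmx (mx2 a b c e) = mx2 e (- b) (- c) a.
Proof.
move=> h.
have hm : mx2 a b c e *m mx2 e (- b) (- c) a = 1%:M.
  rewrite mx2_mul -/oneM oneM_mx2; congr mx2; rewrite -?h; ring.
have [hu _] := mulmx1_unit hm.
by rewrite -[RHS]mul1mx -(mulVmx hu) -mulmxA hm mulmx1.
Qed.

Lemma om7 : omega7 = omega_d 7.
Proof. by rewrite /omega7 /omega_d. Qed.

Lemma om7_facts : (omega_d 7)^* = 1 - omega_d 7 /\ omega_d 7 ^+ 2 = omega_d 7 - 2.
Proof.
have hd : (7 \in dlist)%N by [].
have [h1 h2] := omega_facts hd; move: h1 h2; rewrite /sd /nd /=.
have e : (8 %/ 4 = 2)%N by []. rewrite e.
move=> -> ->; split; [by rewrite mulr1z | by rewrite mulr1z mul1r].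
Qed.

Lemma Umx : SM *m invmx TM *m TwM *m SM = mx2 (-1) 0 (omega_d 7 - 1) (-1).
Proof.
rewrite /TM invmx_mx2; last by ring.
rewrite /SM /TwM om7 !mx2_mul; congr mx2; ring.
Qed.

Lemma Vmx : TM *m invmx TwM *m SM *m TwM = mx2 (1 - omega_d 7) 1 1 (omega_d 7).
Proof.
have [_ hs] := om7_facts.
rewrite /TwM invmx_mx2; last by ring.
rewrite /TM /SM om7 !mx2_mul; congr mx2; ring: hs.
Qed.

Definition phiTw (t : U) : U :=
  (va t, 2 * va t + xU t - 3 * yU t + vc t, xU t + va t, yU t - va t).
Definition psiTw (t : U) : U :=
  (va t, 2 * va t - xU t + 3 * yU t + vc t, xU t - va t, yU t + va t).
Definition phiU (t : U) : U :=
  (va t + xU t - 3 * yU t + 2 * vc t, vc t, xU t + vc t, yU t - vc t).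
Definition psiU (t : U) : U :=
  (va t - xU t + 3 * yU t + 2 * vc t, vc t, xU t - vc t, yU t + vc t).
Definition phiV (t : U) : U :=
  (2 * va t + xU t + 4 * yU t + vc t, va t + xU t + 4 * yU t + 2 * vc t,
   va t + vc t + 3 * yU t, - (va t + vc t + xU t + 3 * yU t)).
Definition psiV (t : U) : U :=
  (2 * va t + vc t - xU t + 3 * yU t, va t + 2 * vc t - xU t + 3 * yU t,
   - xU t - yU t, - va t - vc t + xU t - 2 * yU t).
Definition vw (t : U) : int := 2 * va t - xU t + 3 * yU t + vc t.
Definition vh (t : U) : int := va t - xU t + 3 * yU t + 2 * vc t.

Ltac tc7 t := case: t => [[[a c] x] y];
  rewrite /phiTw /psiTw /phiU /psiU /phiV /psiV /vw /vh /Disc /va /vc /xU /yU /nf /negU /sd /nd /=.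

Lemma phiTw_disc Delta t : Disc 7 Delta t -> Disc 7 Delta (phiTw t).
Proof. tc7 t; have e : (8 %/ 4 = 2)%N by []. rewrite e => <-; ring. Qed.
Lemma psiTw_disc Delta t : Disc 7 Delta t -> Disc 7 Delta (psiTw t).
Proof. tc7 t; have e : (8 %/ 4 = 2)%N by []. rewrite e => <-; ring. Qed.
Lemma phiU_disc Delta t : Disc 7 Delta t -> Disc 7 Delta (phiU t).
Proof. tc7 t; have e : (8 %/ 4 = 2)%N by []. rewrite e => <-; ring. Qed.
Lemma psiU_disc Delta t : Disc 7 Delta t -> Disc 7 Delta (psiU t).
Proof. tc7 t; have e : (8 %/ 4 = 2)%N by []. rewrite e => <-; ring. Qed.
Lemma phiV_disc Delta t : Disc 7 Delta t -> Disc 7 Delta (phiV t).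
Proof. tc7 t; have e : (8 %/ 4 = 2)%N by []. rewrite e => <-; ring. Qed.
Lemma psiV_disc Delta t : Disc 7 Delta t -> Disc 7 Delta (psiV t).
Proof. tc7 t; have e : (8 %/ 4 = 2)%N by []. rewrite e => <-; ring. Qed.

Lemma phiTw_inv t : psiTw (phiTw t) = t.
Proof. tc7 t; congr (_, _, _, _); ring. Qed.
Lemma phiTw_inv' t : phiTw (psiTw t) = t.
Proof. tc7 t; congr (_, _, _, _); ring. Qed.
Lemma phiU_inv t : psiU (phiU t) = t.
Proof. tc7 t; congr (_, _, _, _); ring. Qed.
Lemma phiU_inv' t : phiU (psiU t) = t.
Proof. tc7 t; congr (_, _, _, _); ring. Qed.
Lemma phiV_inv t : psiV (phiV t) = t.
Proof. tc7 t; congr (_, _, _, _); ring. Qed.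
Lemma phiV_inv' t : phiV (psiV t) = t.
Proof. tc7 t; congr (_, _, _, _); ring. Qed.

Lemma vw_phiTw t : vw (phiTw t) = vc t. Proof. tc7 t; ring. Qed.
Lemma vc_psiTw t : vc (psiTw t) = vw t. Proof. tc7 t; ring. Qed.
Lemma vw_phiV t : vw (phiV t) = va t. Proof. tc7 t; ring. Qed.
Lemma vh_phiV t : vh (phiV t) = vc t. Proof. tc7 t; ring. Qed.
Lemma va_psiV t : va (psiV t) = vw t. Proof. tc7 t; ring. Qed.
Lemma vc_psiV t : vc (psiV t) = vh t. Proof. tc7 t; ring. Qed.
Lemma vh_phiU t : vh (phiU t) = va t. Proof. tc7 t; ring. Qed.
Lemma va_psiU t : va (psiU t) = vh t. Proof. tc7 t; ring. Qed.
Lemma vw_neg t : vw (negU t) = - vw t. Proof. tc7 t; ring. Qed.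
Lemma vh_neg t : vh (negU t) = - vh t. Proof. tc7 t; ring. Qed.

Lemma conj_Oel7 x y : (Oel 7 x y)^* = Oel 7 (x + y) (- y).
Proof. by rewrite conj_Oel // /sd /= mul1r. Qed.

Lemma hf_Tw t u v :
  Hf (va t)%:~R (bO 7 t) (bO 7 t)^* (vc t)%:~R (1 * u + omega_d 7) (0 * u + 1)
     (1^* * v + (omega_d 7)^*) (0^* * v + 1^*) = Fv 7 (phiTw t) u v.
Proof.
have [hc hs] := om7_facts.
case: t => [[[a c] x] y].
rewrite /Fv /bO /phiTw /va /vc /xU /yU /= !conj_Oel7 /Oel cj0 cj1 hc /Hf.
rewrite !(intrD, intrM, intrN, intrB); ring: hs.
Qed.

Lemma hf_U t u v :
  Hf (va t)%:~R (bO 7 t) (bO 7 t)^* (vc t)%:~R (-1 * u + 0) ((omega_d 7 - 1) * u + -1)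
     ((-1)^* * v + 0^*) ((omega_d 7 - 1)^* * v + (-1)^*) = Fv 7 (phiU t) u v.
Proof.
have [hc hs] := om7_facts.
case: t => [[[a c] x] y].
rewrite /Fv /bO /phiU /va /vc /xU /yU /= !conj_Oel7 /Oel cj0 cjN1 rmorphB /= hc cj1 /Hf.
rewrite !(intrD, intrM, intrN, intrB); ring: hs.
Qed.

Lemma hf_V t u v :
  Hf (va t)%:~R (bO 7 t) (bO 7 t)^* (vc t)%:~R ((1 - omega_d 7) * u + 1) (1 * u + omega_d 7)
     ((1 - omega_d 7)^* * v + 1^*) (1^* * v + (omega_d 7)^*) = Fv 7 (phiV t) u v.
Proof.
have [hc hs] := om7_facts.
case: t => [[[a c] x] y].
rewrite /Fv /bO /phiV /va /vc /xU /yU /= !conj_Oel7 /Oel rmorphB /= hc cj1 /Hf.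
rewrite !(intrD, intrM, intrN, intrB); ring: hs.
Qed.

Lemma part5 k Delta : odd k -> (0 < Delta)%N ->
  (forall x y, nf 7 x y != Delta%:Z) ->
  slashZ k (P_kD 7 k Delta) [:: (1%:Z, oneM); (- 1%:Z, TwM);
                     (- 1%:Z, SM *m invmx TM *m TwM *m SM);
                     (- 1%:Z, TM *m invmx TwM *m SM *m TwM)] = 0.
Proof.
move=> hk hD hn.
have hd : (7 \in dlist)%N by [].
have [hc hs] := om7_facts.
set w := omega_d 7 in hc hs *.
apply: (ev_eq0 (bu := [:: - (-1) / (w - 1); - w / 1])
               (bv := [:: - (-1)^* / (w - 1)^*; - w^* / 1^*])) => u v hu hv.
rewrite !inE !negb_or in hu hv.
case/andP: hu => hu1 hu2; case/andP: hv => hv1 hv2.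
rewrite ev_slashZ !big_cons big_nil /= addr0 !mulr1z oneM_mx2 Umx Vmx /TwM om7 -/w.
rewrite (ev_slash_P k (mx2 1 0 0 1) u v hd hD) (ev_slash_P k (mx2 1 w 0 1) u v hd hD).
rewrite (ev_slash_P k (mx2 (-1) 0 (w - 1) (-1)) u v hd hD).
rewrite (ev_slash_P k (mx2 (1 - w) 1 1 w) u v hd hD).
rewrite !mul1r !mulrNz !mulr1z !mulN1r.
set f := fun t => Fv 7 t u v ^+ k.
have e1 : \sum_(t \in Aset 7 Delta) ev (slash k (Pterm 7 k t) (mx2 1 0 0 1)) u v =
          \sum_(t \in Aset 7 Delta) f t.
  apply: eq_fsbigr => t _; rewrite ev_slash_mx2.
  - by rewrite hf_one.
  - by rewrite mul0r add0r; exact: oner_neq0.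
  - by rewrite cj0 cj1 mul0r add0r; exact: oner_neq0.
have e2 : \sum_(t \in Aset 7 Delta) ev (slash k (Pterm 7 k t) (mx2 1 w 0 1)) u v =
          \sum_(t \in Aset 7 Delta) f (phiTw t).
  apply: eq_fsbigr => t _; rewrite ev_slash_mx2.
  - by rewrite hf_Tw.
  - by rewrite mul0r add0r; exact: oner_neq0.
  - by rewrite cj0 cj1 mul0r add0r; exact: oner_neq0.
have e3 : \sum_(t \in Aset 7 Delta) ev (slash k (Pterm 7 k t) (mx2 (-1) 0 (w - 1) (-1))) u v =
          \sum_(t \in Aset 7 Delta) f (phiU t).
  apply: eq_fsbigr => t _; rewrite ev_slash_mx2.
  - by rewrite hf_U.
  - apply: pole_ok => //; apply/orP; right; rewrite oppr_eq0; exact: oner_neq0.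
  - apply: pole_ok => //; apply/orP; right; rewrite cjN1 oppr_eq0; exact: oner_neq0.
have e4 : \sum_(t \in Aset 7 Delta) ev (slash k (Pterm 7 k t) (mx2 (1 - w) 1 1 w)) u v =
          \sum_(t \in Aset 7 Delta) f (phiV t).
  apply: eq_fsbigr => t _; rewrite ev_slash_mx2.
  - by rewrite hf_V.
  - apply: pole_ok => //; apply/orP; left; exact: oner_neq0.
  - apply: pole_ok => //; apply/orP; left; rewrite cj1; exact: oner_neq0.
apply: (etrans (f_equal2 (fun a b => a + b) e1 (f_equal2 (fun a b => - a + b) e2 (f_equal2 (fun a b => - a - b) e3 e4)))).
have [rTw finTw] := reindex_D f (@phiTw_disc Delta) (@psiTw_disc Delta)
  (v1 := va) (v2 := vw) (fun t => erefl) vw_phiTw (fun t => erefl) vc_psiTw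
  phiTw_inv phiTw_inv' hd hD.
have [rV finV] := reindex_D f (@phiV_disc Delta) (@psiV_disc Delta)
  (v1 := vw) (v2 := vh) vw_phiV vh_phiV va_psiV vc_psiV
  phiV_inv phiV_inv' hd hD.
have [rU finU] := reindex_D f (@phiU_disc Delta) (@psiU_disc Delta)
  (v1 := vh) (v2 := vc) vh_phiU (fun t => erefl) va_psiU (fun t => erefl)
  phiU_inv phiU_inv' hd hD.
rewrite -rTw -rV -rU.
have hz t : Disc 7 Delta t -> [/\ va t != 0, vw t != 0, vh t != 0 & vc t != 0].
  move=> ht; have [h1 h2] := Disc_nz hd hn ht.
  have [_ h3] := Disc_nz hd hn (psiTw_disc ht).
  have [_ h4] := Disc_nz hd hn (psiV_disc ht).
  by rewrite vc_psiTw in h3; rewrite vc_psiV in h4.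
have := cocycle4 (f := f) (@negUK) (@Disc_neg 7 Delta) (fodd 7 u v hk)
  (fun t => erefl) vw_neg vh_neg (fun t => erefl) hz finTw finV finU.
move=> <-; ring.
Qed.

Unset Implicit Arguments.
Local Close Scope classical_set_scope.

Theorem proposition2p5 (d k Delta : nat)
  (hd : d \in [:: 1; 2; 3; 7; 11]%N) (hk : odd k) (hDelta : (0 < Delta)%N)
  (hnorm : forall b : algC, in_Od d b -> normK b != Delta%:R) :
  let P := P_kD d k Delta in
  [/\ subst2 P Yw Xz = P,
      (forall u : algC, unit_Od d u -> subst2 P (cst2 u * Xz) (cst2 u^* * Yw) = P),
      slashZ k P [:: (1%:Z, oneM); (1%:Z, SM)] = 0,
      slashZ k P [:: (1%:Z, oneM); (1%:Z, TM *m SM *m epsM); (- 1%:Z, TM)] = 0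
    & d = 7%N ->
      slashZ k P [:: (1%:Z, oneM); (- 1%:Z, TwM);
                     (- 1%:Z, SM *m invmx TM *m TwM *m SM);
                     (- 1%:Z, TM *m invmx TwM *m SM *m TwM)] = 0].
Proof.
move=> P.
have hd' : d \in dlist by exact: hd.
have hn := hnormZ hd' hnorm.
split.
- exact: part1.
- exact: part2.
- exact: part3.
- exact: part4.
- by move=> e; subst d; exact: part5.
Qed.
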